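(* Let $(W,+)$ be a commutative group with subgroups $F\le B\le W$, where $F=\{0,1\}$ has order $2$ (so $1$ denotes an element of order $2$ of $W$, and $F$ is identified with the field with two elements). Suppose that $\overline W=W/B$ is an elementary abelian $2$-group, regarded as a vector space over $F$. Let $\overline q:\overline W\to F$ be a quadratic form with associated bilinear form $\overline h:\overline W\times\overline W\to F$, $\overline h(\overline u,\overline v)=\overline q(\overline u+\overline v)-\overline q(\overline u)-\overline q(\overline v)$. Define $q:W\to F$ and $h:W\times W\to F$ by $q(u)=\overline q(u+B)$ and $h(u,v)=\overline h(u+B,v+B)$. Let $Q=\mathcal Q(F,B,W,\overline q)$ be the magma on $F\times W$ with multiplication $$(i,u)\cdot(j,v)=(i+j,\ u+v+jq(u)+ih(u,v)),$$ where $i+j$ and the products $jq(u)$, $ih(u,v)$ are computed in the field $F$ and then regarded as elements of $F\subseteq W$. Then: (i) $Q$ is a centrally nilpotent loop, and it is a central extension of the commutative group $B$ by the elementary abelian $2$-group $F\times\overline W$; (ii) $Q$ is congruence solvable and hence classically solvable; (iii) $Q$ is an extra loop; (iv) $Q$ is a group if and only if the quadratic form $\overline q$ is linear; (v) $X=0\times W$ is an abelian normal subloop of $Q$ (i.e. a normal subloop that is a commutative group); (vi) if $Q$ is not a group, then the congruence of $Q$ induced by $X$ is not abelian.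
   Context: A loop is a magma $(Q,\cdot,1)$ with two-sided identity $1$ in which all left and right translations $y\mapsto xy$, $y\mapsto yx$ are bijections. A subloop is normal if it is the kernel of a loop homomorphism. The nucleus $\mathrm{Nuc}(Q)$ is the set of $x$ with $x(yz)=(xy)z$, $y(xz)=(yx)z$, $y(zx)=(yz)x$ for all $y,z$; the center $Z(Q)$ consists of nuclear elements commuting with all elements. Given a commutative group $(X,+,0)$, a loop $F'$ and $\theta:F'\times F'\to X$ with $\theta_{1,r}=0=\theta_{r,1}$, the loop on $F'\times X$ with $(r,x)(s,y)=(rs,x+y+\theta_{r,s})$ is a central extension of $X$ by $F'$. A loop is centrally nilpotent if it has a series $Q=Q_0\ge Q_1\ge\dots\ge Q_n=1$ of normal subloops of $Q$ with $Q_i/Q_{i+1}\le Z(Q/Q_{i+1})$. A quadratic form on a vector space $V$ over a field $K$ is a map $q:V\to K$ with $q(\lambda u)=\lambda^2q(u)$ such that $(u,v)\mapsto q(u+v)-q(u)-q(v)$ is bilinear. An extra loop is a loop satisfying $x(y\cdot zx)=(xy\cdot z)x$. For a normal subloop $X$ of a loop $Q$, the induced congruence $\alpha_X$ has classes $\{aX\}$; $X$ induces an abelian congruence (is abelian in $Q$) if $[\alpha_X,\alpha_X]_Q$ is the trivial congruence in the Freese–McKenzie commutator theory of congruence modular varieties; equivalently, $Q$ is isomorphic to an abelian extension of $X$ by $Q/X$, i.e. a loop on $Q/X\times X$ with $(r,x)(s,y)=(rs,\varphi_{r,s}(x)+\psi_{r,s}(y)+\theta_{r,s})$ where $\varphi_{r,s},\psi_{r,s}\in\mathrm{Aut}(X)$,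 $\theta_{r,s}\in X$, $\varphi_{r,1}=\mathrm{id}=\psi_{1,r}$, $\theta_{1,r}=0=\theta_{r,1}$. A loop is classically solvable if it has a series $Q=Q_0\ge\dots\ge Q_n=1$ of normal subloops of $Q$ with each $Q_i/Q_{i+1}$ a commutative group; it is congruence solvable if it has such a series with each $Q_i/Q_{i+1}$ inducing an abelian congruence of $Q/Q_{i+1}$. *)

(* Defs.v *)
From HB Require Import structures.
From mathcomp Require Import all_boot all_algebra.
Set Implicit Arguments. Unset Strict Implicit. Unset Printing Implicit Defensive.
Import GRing.Theory.
Local Open Scope ring_scope.

Record magma := Magma { mcar :> Type; mmul : mcar -> mcar -> mcar; mone : mcar }.
Arguments Magma : clear implicits.
Arguments mmul {m} _ _.
Arguments mone m : assert.

Definition is_loop (Q : magma) : Prop :=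
  (forall x : Q, mmul (mone Q) x = x /\ mmul x (mone Q) = x) /\
  (forall x : Q, bijective (mmul x)) /\
  (forall x : Q, bijective (fun y : Q => mmul y x)).

Definition is_group (Q : magma) : Prop :=
  is_loop Q /\ forall x y z : Q, mmul x (mmul y z) = mmul (mmul x y) z.

Definition is_hom (Q P : magma) (f : Q -> P) : Prop :=
  forall x y : Q, f (mmul x y) = mmul (f x) (f y).

Definition is_iso (Q P : magma) (f : Q -> P) : Prop := is_hom f /\ bijective f.

Definition isomorphic (Q P : magma) : Prop := exists f : Q -> P, is_iso f.

Definition subsetP (T : Type) (A B : T -> Prop) : Prop := forall x, A x -> B x.

Definition imageP (T U : Type) (f : T -> U) (A : T -> Prop) : U -> Prop :=
  fun y => exists2 x, A x & f x = y.

Definition normal_subloop (Q : magma) (N : Q -> Prop) : Prop :=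
  exists P : magma, is_loop P /\
    exists f : Q -> P, is_hom f /\ forall x, N x <-> f x = mone P.

(* f : Q -> P is a surjective loop homomorphism with kernel N,
   i.e. P (with f) is the quotient loop Q/N (up to isomorphism) *)
Definition quotient_map (Q P : magma) (N : Q -> Prop) (f : Q -> P) : Prop :=
  is_loop P /\ is_hom f /\ (forall y : P, exists x, f x = y) /\
  forall x, N x <-> f x = mone P.

Definition in_nuc (Q : magma) (x : Q) : Prop :=
  forall y z : Q,
    mmul x (mmul y z) = mmul (mmul x y) z /\
    mmul y (mmul x z) = mmul (mmul y x) z /\
    mmul y (mmul z x) = mmul (mmul y z) x.

Definition in_center (Q : magma) (x : Q) : Prop :=
  in_nuc x /\ forall y : Q, mmul x y = mmul y x.

Definition comm_group_sub (Q : magma) (A : Q -> Prop) : Prop :=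
  forall x y z : Q, A x -> A y -> A z ->
    mmul x y = mmul y x /\ mmul x (mmul y z) = mmul (mmul x y) z.

Definition normal_series (Q : magma) (S : nat -> Q -> Prop) (n : nat) : Prop :=
  (forall x, S 0%N x) /\ (forall x, S n x <-> x = mone Q) /\
  (forall i, (i < n)%N -> subsetP (S i.+1) (S i)) /\
  (forall i, (i <= n)%N -> normal_subloop (S i)).

Definition centrally_nilpotent (Q : magma) : Prop :=
  is_loop Q /\ exists (n : nat) (S : nat -> Q -> Prop), normal_series S n /\
    forall i, (i < n)%N -> exists (P : magma) (f : Q -> P),
      quotient_map (S i.+1) f /\ subsetP (imageP f (S i)) (@in_center P).

Definition classically_solvable (Q : magma) : Prop :=
  is_loop Q /\ exists (n : nat) (S : nat -> Q -> Prop), normal_series S n /\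
    forall i, (i < n)%N -> exists (P : magma) (f : Q -> P),
      quotient_map (S i.+1) f /\ comm_group_sub (imageP f (S i)).

Definition aext_mul (L : magma) (X : zmodType) (phi psi : L -> L -> X -> X)
  (th : L -> L -> X) (a b : L * X) : L * X :=
  (mmul a.1 b.1, phi a.1 b.1 a.2 + psi a.1 b.1 b.2 + th a.1 b.1).

Definition aext (L : magma) (X : zmodType) (phi psi : L -> L -> X -> X)
  (th : L -> L -> X) : magma :=
  Magma (L * X)%type (aext_mul phi psi th) (mone L, 0).

Definition is_aut (X : zmodType) (f : X -> X) : Prop :=
  (forall x y, f (x + y) = f x + f y) /\ bijective f.

(* N induces an abelian congruence of Q (N is abelian in Q): Q is isomorphic to an
   abelian extension of a commutative group X by Q/N, the isomorphism carrying the
   congruence induced by N to the kernel of the projection onto the first factor *)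
Definition abelian_in (Q : magma) (N : Q -> Prop) : Prop :=
  exists (L : magma) (X : zmodType) (phi psi : L -> L -> X -> X) (th : L -> L -> X),
    is_loop L /\
    (forall r s, is_aut (phi r s) /\ is_aut (psi r s)) /\
    (forall r, phi r (mone L) =1 id /\ psi (mone L) r =1 id /\
               th (mone L) r = 0 /\ th r (mone L) = 0) /\
    exists f : Q -> aext phi psi th,
      is_iso f /\ forall x, N x <-> (f x : L * X).1 = mone L.

Definition congruence_solvable (Q : magma) : Prop :=
  is_loop Q /\ exists (n : nat) (S : nat -> Q -> Prop), normal_series S n /\
    forall i, (i < n)%N -> exists (P : magma) (f : Q -> P),
      quotient_map (S i.+1) f /\ abelian_in (imageP f (S i)).

Definition cext (L : magma) (X : zmodType) (th : L -> L -> X) : magma :=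
  aext (fun _ _ => id) (fun _ _ => id) th.

Definition central_extension_of (Q : magma) (X : zmodType) (L : magma) : Prop :=
  exists th : L -> L -> X,
    (forall r, th (mone L) r = 0 /\ th r (mone L) = 0) /\ isomorphic Q (cext th).

Definition is_extra (Q : magma) : Prop :=
  forall x y z : Q, mmul x (mmul y (mmul z x)) = mmul (mmul (mmul x y) z) x.

(* F = {0, one} <= W is identified with the field bool (xor = +, && = * ). *)

Definition embF (W : zmodType) (one : W) (b : bool) : W := if b then one else 0.

Definition hq (W : zmodType) (q : W -> bool) (u v : W) : bool :=
  q (u + v) (+) q u (+) q v.

Definition Qmul (W : zmodType) (one : W) (q : W -> bool) (a b : bool * W) : bool * W :=
  (a.1 (+) b.1, a.2 + b.2 + embF one (b.1 && q a.2) + embF one (a.1 && hq q a.2 b.2)).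

Definition Qloop (W : zmodType) (one : W) (q : W -> bool) : magma :=
  Magma (bool * W)%type (Qmul one q) (false, 0).

Definition FxW (W : zmodType) : magma :=
  Magma (bool * W)%type (fun a b => (a.1 (+) b.1, a.2 + b.2)) (false, 0).

(* Main.v *)
Require Import Defs.
From HB Require Import structures.
From mathcomp Require Import all_boot all_algebra.
From Stdlib Require Import ClassicalEpsilon Classical.
Import GRing.Theory.
Local Open Scope ring_scope.
Set Implicit Arguments. Unset Strict Implicit. Unset Printing Implicit Defensive.
Local Open Scope quotient_scope.

Definition pB (W : zmodType) (B : W -> Prop) (w : W) : bool :=
  if excluded_middle_informative (B w) then true else false.
Lemma pBP (W : zmodType) (B : W -> Prop) w : reflect (B w) (pB B w).
Proof. rewrite /pB; case: excluded_middle_informative => h; by constructor. Qed.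

Section Grp.
Variables (W : zmodType) (B : W -> Prop).
Hypotheses (HB0 : B 0) (HBsub : forall u v, B u -> B v -> B (u - v)).
Lemma BN u : B u -> B (- u).
Proof. by move=> h; rewrite -sub0r; apply: HBsub. Qed.
Lemma BD u v : B u -> B v -> B (u + v).
Proof. by move=> hu hv; rewrite -[v]opprK; apply: HBsub=> //; apply: BN. Qed.

Definition eB : rel W := fun u v => pB B (u - v).
Lemma eB_refl : reflexive eB.
Proof. by move=> u; apply/pBP; rewrite subrr. Qed.
Lemma eB_sym : symmetric eB.
Proof.
move=> u v; apply/pBP/pBP => h; by rewrite -opprB; apply: BN.
Qed.
Lemma eB_trans : transitive eB.
Proof.
move=> v u w /pBP h1 /pBP h2; apply/pBP.
have -> : u - w = (u - v) + (v - w) by rewrite addrA subrK.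
exact: BD.
Qed.
Definition eqB := EquivRel eB eB_refl eB_sym eB_trans.
Definition WB := {eq_quot eqB}.
Definition piB (u : W) : WB := \pi_WB u.
Lemma piB_eq u v : piB u = piB v <-> B (u - v).
Proof.
split; first by move/eqmodP => /pBP.
by move=> h; apply/eqmodP; apply/pBP.
Qed.
Lemma piB_surj (c : WB) : piB (repr c) = c.
Proof. exact: reprK. Qed.
Lemma repr_piB u : B (repr (piB u) - u).
Proof. by apply/piB_eq; rewrite piB_surj. Qed.

Definition WBadd (a b : WB) : WB := piB (repr a + repr b).
Definition WBopp (a : WB) : WB := piB (- repr a).
Definition WBzero : WB := piB 0.

Lemma WBaddE u v : WBadd (piB u) (piB v) = piB (u + v).
Proof.
apply/piB_eq.
have -> : repr (piB u) + repr (piB v) - (u + v) = (repr (piB u) - u) + (repr (piB v) - v).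
  by rewrite opprD addrACA.
by apply: BD; apply: repr_piB.
Qed.
Lemma WBoppE u : WBopp (piB u) = piB (- u).
Proof.
apply/piB_eq.
have -> : - repr (piB u) - - u = - (repr (piB u) - u) by rewrite opprB opprK addrC.
by apply: BN; apply: repr_piB.
Qed.
Lemma WB_ind (P : WB -> Prop) : (forall u, P (piB u)) -> forall a, P a.
Proof. by move=> h a; rewrite -(piB_surj a). Qed.

Lemma WBaddA : associative WBadd.
Proof.
move=> a b c; rewrite -(piB_surj a) -(piB_surj b) -(piB_surj c).
by rewrite !WBaddE addrA.
Qed.
Lemma WBaddC : commutative WBadd.
Proof. by move=> a b; rewrite -(piB_surj a) -(piB_surj b) !WBaddE addrC. Qed.
Lemma WBadd0 : left_id WBzero WBadd.
Proof. by move=> a; rewrite -(piB_surj a) /WBzero WBaddE add0r. Qed.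
Lemma WBaddN : left_inverse WBzero WBopp WBadd.
Proof. by move=> a; rewrite -(piB_surj a) WBoppE WBaddE addNr. Qed.
End Grp.

HB.instance Definition _ (W : zmodType) (B : W -> Prop) HB0 HBsub :=
  Choice.copy (@WB W B HB0 HBsub) {eq_quot (@eqB W B HB0 HBsub)}.
HB.instance Definition _ (W : zmodType) (B : W -> Prop) HB0 HBsub :=
  GRing.isZmodule.Build (@WB W B HB0 HBsub) (@WBaddA W B HB0 HBsub)
   (@WBaddC W B HB0 HBsub) (@WBadd0 W B HB0 HBsub) (@WBaddN W B HB0 HBsub).

Section Grp2.
Variables (W : zmodType) (B : W -> Prop).
Hypotheses (HB0 : B 0) (HBsub : forall u v, B u -> B v -> B (u - v)).
Local Notation WB := (@WB W B HB0 HBsub).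
Local Notation piB := (@piB W B HB0 HBsub).
Lemma piB_add u v : piB (u + v) = piB u + piB v.
Proof. by rewrite -WBaddE. Qed.
Lemma piB_0 : piB 0 = 0.
Proof. by []. Qed.
Lemma piB_eq0 u : piB u = 0 <-> B u.
Proof. by rewrite -piB_0 piB_eq subr0. Qed.
Definition sB (c : WB) : W := if c == 0 then 0 else repr c.
Lemma sBK c : piB (sB c) = c.
Proof. rewrite /sB; case: eqP => [->|_] //; exact: piB_surj. Qed.
Lemma sB0 : sB 0 = 0.
Proof. by rewrite /sB eqxx. Qed.
Lemma sB_B u : B (sB (piB u) - u).
Proof. by apply/piB_eq; rewrite sBK. Qed.

End Grp2.

Definition BT (W : zmodType) (B : W -> Prop) (HB0 : B 0)
  (HBsub : forall u v, B u -> B v -> B (u - v)) := {w : W | pB B w}.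
HB.instance Definition _ (W : zmodType) (B : W -> Prop) HB0 HBsub :=
  Choice.copy (@BT W B HB0 HBsub) {w : W | pB B w}.
Section Sub.
Variables (W : zmodType) (B : W -> Prop).
Hypotheses (HB0 : B 0) (HBsub : forall u v, B u -> B v -> B (u - v)).
Local Notation BT := (@BT W B HB0 HBsub).
Definition BTadd (x y : BT) : BT :=
  exist _ (val x + val y) (introT (pBP _ _) (BD HB0 HBsub (elimT (pBP _ _) (valP x)) (elimT (pBP _ _) (valP y)))).
Definition BTopp (x : BT) : BT :=
  exist _ (- val x) (introT (pBP _ _) (BN HB0 HBsub (elimT (pBP _ _) (valP x)))).
Definition BTzero : BT := exist _ 0 (introT (pBP _ _) HB0).
Lemma BTaddA : associative BTadd.
Proof. by move=> x y z; apply: val_inj; rewrite /= addrA. Qed.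
Lemma BTaddC : commutative BTadd.
Proof. by move=> x y; apply: val_inj; rewrite /= addrC. Qed.
Lemma BTadd0 : left_id BTzero BTadd.
Proof. by move=> x; apply: val_inj; rewrite /= add0r. Qed.
Lemma BTaddN : left_inverse BTzero BTopp BTadd.
Proof. by move=> x; apply: val_inj; rewrite /= addNr. Qed.
End Sub.

HB.instance Definition _ (W : zmodType) (B : W -> Prop) HB0 HBsub :=
  GRing.isZmodule.Build (@BT W B HB0 HBsub) (@BTaddA W B HB0 HBsub)
   (@BTaddC W B HB0 HBsub) (@BTadd0 W B HB0 HBsub) (@BTaddN W B HB0 HBsub).




Lemma aext_tc (L : magma) (X : zmodType) (phi psi : L -> L -> X -> X) (th : L -> L -> X)
  (Hadd : forall r s x y, phi r s (x + y) = phi r s x + phi r s y)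
  (A B C1 D1 C2 D2 : L * X) : A.1 = B.1 -> C1.1 = D1.1 -> C2.1 = D2.1 ->
  aext_mul phi psi th (aext_mul phi psi th A C1) C2 =
  aext_mul phi psi th (aext_mul phi psi th A D1) D2 ->
  aext_mul phi psi th (aext_mul phi psi th B C1) C2 =
  aext_mul phi psi th (aext_mul phi psi th B D1) D2.
Proof.
case: A B C1 D1 C2 D2 => [a x] [b y] [c1 z1] [d1 w1] [c2 z2] [d2 w2] /= <- <- <-.
rewrite /aext_mul /=; case=> E; congr (_, _).
move: E; rewrite -!addrA !Hadd -!addrA => /addrI ->.
by [].
Qed.


Definition F2 := bool.
HB.instance Definition _ := Choice.copy F2 bool.
Lemma F2_addN : left_inverse (false : F2) (id : F2 -> F2) addb.
Proof. by case. Qed.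
HB.instance Definition _ := GRing.isZmodule.Build F2 addbA addbC addFb F2_addN.

Definition ZM (Z : zmodType) : magma := Defs.Magma Z +%R 0.
Definition Unit : magma := Defs.Magma unit (fun _ _ => tt) tt.

Lemma Unit_loop : is_loop Unit.
Proof.
split; first by case.
by split => x; exists id => -[]; case: x.
Qed.

Lemma ZM_loop (Z : zmodType) : is_loop (ZM Z).
Proof.
split; first by move=> x /=; rewrite add0r addr0.
split=> x /=.
- by exists (fun z => - x + z) => y; rewrite ?addKr ?addNKr.
- by exists (fun z => z - x) => y; rewrite ?addrK ?subrK.
Qed.

Lemma ZM_center (Z : zmodType) (x : ZM Z) : in_center x.
Proof. by split=> [y z|y] /=; rewrite ?addrA // (addrC y x) ?addrA. Qed.

Lemma ZM_comm (Z : zmodType) (N : ZM Z -> Prop) : comm_group_sub N.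
Proof. move=> x y z _ _ _; split; [exact: addrC | exact: addrA]. Qed.

Lemma ZM_abelian (Z : zmodType) (N : ZM Z -> Prop) : (forall x, N x) -> abelian_in N.
Proof.
move=> HN; exists Unit, Z, (fun _ _ => id), (fun _ _ => id), (fun _ _ => 0).
split; first exact: Unit_loop.
split; first by move=> r s; split; split=> //; exists id.
split; first by [].
exists (fun x => (tt, x)); split; last by move=> x; split.
split; first by move=> x y; rewrite /= /aext_mul /= addr0.
by exists snd => //; case=> [[] x].
Qed.

Lemma pairD (Z1 Z2 : zmodType) (a c : Z1) (b d : Z2) : (a, b) + (c, d) = (a + c, b + d).
Proof. by []. Qed.


Section QL.
Variables (W : zmodType) (B : W -> Prop) (one : W) (q : W -> bool).
Hypotheses (Hone0 : one != 0) (Hone2 : one + one = 0)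
  (HB0 : B 0) (HBsub : forall u v, B u -> B v -> B (u - v)) (HBone : B one)
  (HB2 : forall u, B (u + u))
  (Hqwd : forall u b, B b -> q (u + b) = q u)
  (Hq0 : q 0 = false)
  (Hhl : forall u u' v, hq q (u + u') v = hq q u v (+) hq q u' v)
  (Hhr : forall u v v', hq q u (v + v') = hq q u v (+) hq q u v').

Local Notation F := (embF one).
Local Notation h := (hq q).
Local Notation Q := (Qloop one q).
Local Notation WB := (WB HB0 HBsub).
Local Notation piB := (piB HB0 HBsub).
Local Notation BT := (BT HB0 HBsub).
Local Notation sB := (@sB W B HB0 HBsub).

Lemma embF_B c : B (F c).
Proof. by case: c. Qed.
Lemma embFD a b : F a + F b = F (a (+) b).
Proof. by case: a; case: b; rewrite /= ?addr0 ?add0r. Qed.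
Lemma embF_inj a b : F a = F b -> a = b.
Proof.
case: a; case: b => //= h1; first by move: Hone0; rewrite h1 eqxx.
by move: Hone0; rewrite -h1 eqxx.
Qed.
Lemma qB b : B b -> q b = false.
Proof. by move=> hb; rewrite -[b]add0r Hqwd. Qed.
Lemma qF u c : q (u + F c) = q u.
Proof. exact: Hqwd (embF_B c). Qed.
Lemma hqC u v : h u v = h v u.
Proof. by rewrite /hq addrC -addbA (addbC (q u)) addbA. Qed.
Lemma hqBr u b : B b -> h u b = false.
Proof. by move=> hb; rewrite /hq Hqwd // (qB hb) addbb. Qed.
Lemma hqBl u b : B b -> h b u = false.
Proof. by move=> hb; rewrite hqC hqBr. Qed.
Lemma hqFr u c : h u (F c) = false.
Proof. exact: hqBr (embF_B c). Qed.
Lemma hqFl u c : h (F c) u = false.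
Proof. exact: hqBl (embF_B c). Qed.
Lemma hqaddFr u v c : h u (v + F c) = h u v.
Proof. by rewrite Hhr hqFr addbF. Qed.
Lemma hqaddFl u v c : h (u + F c) v = h u v.
Proof. by rewrite Hhl hqFl addbF. Qed.
Lemma hqF u v c d : h (u + F c) (v + F d) = h u v.
Proof. by rewrite Hhl !Hhr !hqFr hqFl !addbF. Qed.
Lemma hqxx u : h u u = false.
Proof. by rewrite /hq qB // addbb. Qed.
Lemma qD u v : q (u + v) = q u (+) q v (+) h u v.
Proof. rewrite /hq; by case: (q (u + v)); case: (q u); case: (q v). Qed.

Lemma QmulE i j U V c d :
  @mmul Q (i, U + F c) (j, V + F d) =
  (i (+) j, (U + V) + F (c (+) d (+) (j && q U) (+) (i && h U V))).
Proof.
rewrite /= /Qmul /= qF hqF -!embFD; congr (_, _).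
by rewrite addrACA !addrA.
Qed.
Lemma nf (i : bool) (u : W) : (i, u) = (i, u + F false).
Proof. by rewrite addr0. Qed.
Lemma pairE (b1 b2 : bool) (S1 S2 : W) c1 c2 :
  b1 = b2 -> S1 = S2 -> c1 = c2 -> (b1, S1 + F c1) = (b2, S2 + F c2).
Proof. by move=> -> -> ->. Qed.

Lemma Q_extra : is_extra Q.
Proof.
move=> [i u] [j v] [k w]; rewrite (nf i u) (nf j v) (nf k w) !QmulE.
apply: pairE; first by case: i; case: j; case: k.
  by rewrite !addrA.
rewrite !qD !Hhl !Hhr !hqxx ?(hqC v u) ?(hqC w u) ?(hqC w v).
move: (q u) (q v) (q w) (h u v) (h u w) (h v w) => a b c d e f.
by case: i; case: j; case: k; case: a; case: b; case: c; case: d; case: e; case: f.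
Qed.

Ltac bsolve := repeat (match goal with
 | |- context [hq q ?a ?b] => let z := fresh "z" in move: (hq q a b) => z; case: z
 | |- context [q ?a] => let z := fresh "z" in move: (q a) => z; case: z
 | b : bool |- _ => case: b
 end); by [].

Lemma FF e : F e + F e = 0.
Proof. by rewrite embFD addbb. Qed.
Lemma QmulR (x y : Q) : @mmul Q x y =
  (x.1 (+) y.1, x.2 + y.2 + F (y.1 && q x.2 (+) x.1 && h x.2 y.2)).
Proof. by rewrite /= /Qmul -addrA embFD. Qed.

Definition linv (x z : Q) : Q := (x.1 (+) z.1, (z.2 - x.2) +
   F ((x.1 (+) z.1) && q x.2 (+) x.1 && h x.2 (z.2 - x.2))).
Definition rinv (y z : Q) : Q := (y.1 (+) z.1, (z.2 - y.2) +
   F (y.1 && q (z.2 - y.2) (+) (y.1 (+) z.1) && h (z.2 - y.2) y.2)).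

Lemma Q_loop : is_loop Q.
Proof.
split; [|split].
- move=> [i u]; rewrite !QmulR /= Hq0 addbF andbF add0r addr0 addbF.
  by rewrite (hqBr _ HB0) andbF !addr0.
- move=> x; exists (linv x); move=> y; rewrite /linv QmulR.
  + case: x y => [i u] [j v] /=; congr (_, _); first by case: i; case: j.
    have -> : u + v + F (j && q u (+) i && h u v) - u = v + F (j && q u (+) i && h u v).
      by rewrite addrAC [u + v]addrC addrK.
    rewrite hqaddFr addbA addbb /=.
    by rewrite -addrA FF addr0.
  + case: x y => [i u] [k w] /=; congr (_, _); first by case: i; case: k.
    rewrite hqaddFr.
    by rewrite addrA [u + _]addrC subrK -addrA FF addr0.
- move=> y; exists (rinv y); move=> x; rewrite /rinv QmulR.
  + case: x y => [i u] [j v] /=; congr (_, _); first by case: i; case: j.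
    have -> : u + v + F (j && q u (+) i && h u v) - v = u + F (j && q u (+) i && h u v).
      by rewrite addrAC addrK.
    rewrite hqaddFl qF addbCA addbb addbF.
    by rewrite -addrA FF addr0.
  + case: x y => [i u] [k w] /=; congr (_, _); first by case: i; case: k.
    rewrite hqaddFl qF.
    by rewrite [u - w + _ + w]addrAC subrK -addrA FF addr0.
Qed.

Lemma hq0r u : h u 0 = false.
Proof. exact: hqBr HB0. Qed.
Lemma hq0l u : h 0 u = false.
Proof. exact: hqBl HB0. Qed.

Lemma Q_group_iff : is_group Q <-> forall u v, q (u + v) = q u (+) q v.
Proof.
split.
- move=> [_ Has] u v.
  have := Has (false, u) (false, v) (true, 0).
  rewrite (nf false u) (nf false v) (nf true 0) !QmulE.
  move/(congr1 snd) => /=; rewrite !addr0 => /addrI /embF_inj.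
  by rewrite !addbF => <-; rewrite addbC.
- move=> Hlin.
  have hl : forall u v, h u v = false.
    by move=> u v; rewrite /hq Hlin -addbA addbb.
  split; first exact: Q_loop.
  move=> [i u] [j v] [k w]; rewrite (nf i u) (nf j v) (nf k w) !QmulE.
  apply: pairE; first by case: i; case: j; case: k.
    by rewrite !addrA.
  rewrite !Hlin !hl; bsolve.
Qed.

Lemma Q_center b : B b -> @in_center Q (false, b).
Proof.
move=> hb; split.
- move=> [j v] [k w]; rewrite (nf false b) (nf j v) (nf k w) !QmulE.
  split; [|split]; (apply: pairE; [by case: j; case: k | by rewrite !addrA |]);
  rewrite ?qD ?Hhl ?Hhr ?(qB hb) ?(hqBr _ hb) ?(hqBl _ hb); bsolve.
- move=> [j v]; rewrite (nf false b) (nf j v) !QmulE.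
  apply: pairE; [by case: j | by rewrite addrC |].
  rewrite ?(qB hb) ?(hqBr _ hb) ?(hqBl _ hb); bsolve.
Qed.

Lemma Q_X_comm : comm_group_sub (fun a : Q => a.1 = false).
Proof.
move=> [i u] [j v] [k w] Hi Hj Hk; simpl in Hi, Hj, Hk; subst; rewrite (nf false u) (nf false v) (nf false w) !QmulE.
split; (apply: pairE; [by [] | by rewrite ?addrA // addrC |]); bsolve.
Qed.

Lemma Q_vi : ~ is_group Q -> ~ abelian_in (fun a : Q => a.1 = false).
Proof.
move=> ng [L [X [phi [psi [th [HL [Haut [Hid [f [[fhom fbij] fX]]]]]]]]]].
have [x [y hxy]] : exists x y, h x y = true.
  apply: NNPP => nex; apply: ng; apply/Q_group_iff => u v.
  rewrite qD; case E: (h u v); last by rewrite addbF.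
  by exfalso; apply: nex; exists u, v.
pose a : Q := (false, 0); pose b : Q := (false, x).
pose c1 : Q := (true, 0); pose d1 : Q := (true, y).
pose c2 : Q := (false, y + y); pose d2 : Q := (false, y).
have eqA : @mmul Q (@mmul Q a c1) c2 = @mmul Q (@mmul Q a d1) d2.
  rewrite /a /c1 /c2 /d1 /d2 (nf false 0) (nf true 0) (nf true y) (nf false y) (nf false (y + y)) !QmulE.
  apply: pairE => //; first by rewrite !add0r.
  rewrite ?add0r ?Hq0 ?hq0l ?hq0r ?Hhr ?hqxx; bsolve.
have neqB : @mmul Q (@mmul Q b c1) c2 <> @mmul Q (@mmul Q b d1) d2.
  rewrite /b /c1 /c2 /d1 /d2 (nf false x) (nf true 0) (nf true y) (nf false y) (nf false (y + y)) !QmulE.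
  move/(congr1 snd) => /=; rewrite !addr0 !addrA => /addrI /embF_inj.
  rewrite ?qD ?Hq0 ?hq0l ?hq0r ?Hhr ?Hhl ?hqxx hxy; bsolve.
have d1E : d1 = @mmul Q c1 (false, y).
  rewrite /c1 /d1 (nf true 0) (nf false y) QmulE /=.
  by rewrite add0r hq0l /= addr0.
have fa : (f a).1 = mone L by apply/fX.
have fb : (f b).1 = mone L by apply/fX.
have fc2 : (f c2).1 = mone L by apply/fX.
have fd2 : (f d2).1 = mone L by apply/fX.
have fy : (f (false, y)).1 = mone L by apply/fX.
have fd1 : (f c1).1 = (f d1).1.
  by rewrite d1E fhom /= fy (proj2 (proj1 HL _)).
apply: neqB; apply: (bij_inj fbij); rewrite !fhom.
apply: (@aext_tc L X phi psi th _ (f a)).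
- by move=> r s; case: (Haut r s) => [[]].
- by rewrite fa fb.
- exact: fd1.
- by rewrite fc2 fd2.
- by move: (congr1 f eqA); rewrite !fhom.
Qed.

Definition LL : magma := ZM (F2 * WB)%type.
Definition piQ (x : bool * W) : LL := (x.1 : F2, piB x.2).

Lemma piB_F c : piB (F c) = 0.
Proof. by apply/piB_eq0; apply: embF_B. Qed.

Lemma piQ_hom : @is_hom Q LL piQ.
Proof.
move=> [i u] [j v]; rewrite QmulR /piQ /=.
by rewrite !piB_add // piB_F addr0.
Qed.

Definition toBT (w : W) : BT :=
  insubd (exist _ 0 (introT (pBP B 0) HB0) : {x : W | pB B x}) w.
Lemma toBTK w : B w -> proj1_sig (toBT w) = w.
Proof. by move=> hw; rewrite /toBT insubdK //; apply/pBP. Qed.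
Lemma BT_inj (x y : BT) : proj1_sig x = proj1_sig y -> x = y.
Proof.
case: x => x hx; case: y => y hy /= e; subst; congr exist; apply: bool_irrelevance.
Qed.
Lemma BT_val_add (x y : BT) : proj1_sig (x + y) = proj1_sig x + proj1_sig y.
Proof. by []. Qed.
Lemma BT_val0 : proj1_sig (0 : BT) = 0.
Proof. by []. Qed.
Lemma BT_B (x : BT) : B (proj1_sig x).
Proof. exact: (elimT (pBP _ _) (proj2_sig x)). Qed.

Lemma BDq u v : B u -> B v -> B (u + v).
Proof. exact: (BD HB0 HBsub). Qed.
Lemma BNq u : B u -> B (- u).
Proof. exact: (BN HB0 HBsub). Qed.

Lemma sB_B' u : B (u - sB (piB u)).
Proof. by rewrite -opprB; apply: BNq; apply: sB_B. Qed.
Lemma q_sB u : q (sB (piB u)) = q u.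
Proof.
have -> : sB (piB u) = u + (sB (piB u) - u) by rewrite addrC subrK.
by rewrite Hqwd //; apply: sB_B.
Qed.
Lemma hB_inv u v b1 b2 : B b1 -> B b2 -> h (u + b1) (v + b2) = h u v.
Proof.
move=> h1 h2; rewrite Hhl !Hhr (hqBr _ h2) (hqBr _ h2) (hqBl _ h1).
by rewrite !addbF.
Qed.
Lemma h_sB u v : h (sB (piB u)) (sB (piB v)) = h u v.
Proof.
have -> : sB (piB u) = u + (sB (piB u) - u) by rewrite addrC subrK.
have -> : sB (piB v) = v + (sB (piB v) - v) by rewrite addrC subrK.
by apply: hB_inv; apply: sB_B.
Qed.

Definition thQ (r s : LL) : BT :=
  toBT (sB r.2 + sB s.2 - sB (r.2 + s.2) + F (s.1 && q (sB r.2)) + F (r.1 && h (sB r.2) (sB s.2))).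

Lemma piB_N u : piB (- u) = - piB u.
Proof. by rewrite -WBoppE. Qed.

Lemma thQ_B (r s : LL) : B (sB r.2 + sB s.2 - sB (r.2 + s.2) + F (s.1 && q (sB r.2)) + F (r.1 && h (sB r.2) (sB s.2))).
Proof.
apply: BDq; last exact: embF_B.
apply: BDq; last exact: embF_B.
apply/piB_eq0; rewrite !piB_add piB_N !sBK.
by rewrite subrr.
Qed.

Definition fQ (x : Q) : cext thQ := ((x.1 : F2, piB x.2), toBT (x.2 - sB (piB x.2))).
Definition gQ (y : cext thQ) : Q := (y.1.1, sB y.1.2 + proj1_sig y.2).

Lemma acL (u v su sv s a b : W) :
  u + v + (a + b) - s = (u - su) + (v - sv) + (su + sv - s + a + b).
Proof.
rewrite [(u - su) + _]addrACA -opprD.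
set T := su + sv.
rewrite !addrA -(addrA (u + v - T) su sv) subrK.
rewrite -!addrA; congr (_ + (_ + _)).
by rewrite [RHS]addrC -addrA.
Qed.

Lemma fQ_iso : is_iso fQ.
Proof.
split.
- move=> [i u] [j v]; rewrite QmulR /fQ /= /aext_mul /=; congr (_, _).
  + by rewrite pairD !piB_add piB_F addr0.
  + apply: BT_inj; rewrite !BT_val_add (toBTK (thQ_B _ _)) (toBTK (sB_B' u)) (toBTK (sB_B' v)) (toBTK (sB_B' _)) /=.
    rewrite !piB_add piB_F addr0 -!piB_add q_sB h_sB -embFD.
    exact: acL.
- apply: (@Bijective _ _ _ gQ).
  + move=> [i u]; rewrite /gQ /fQ /= (toBTK (sB_B' u)).
    by rewrite addrC subrK.
  + move=> [[a c] x]; rewrite /gQ /fQ /=.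
    rewrite piB_add sBK.
    have -> : piB (proj1_sig x) = 0 by apply/piB_eq0; apply: BT_B.
    rewrite addr0; congr (_, _).
    apply: BT_inj; rewrite toBTK; first by rewrite addrC addKr.
    by rewrite addrC addKr; apply: BT_B.
Qed.

Lemma thQ1 r : thQ (mone LL) r = 0 /\ thQ r (mone LL) = 0.
Proof.
case: r => a c; split; apply: BT_inj; rewrite (toBTK (thQ_B _ _)) BT_val0 /=.
- by rewrite sB0 !add0r Hq0 andbF /= subrr !addr0.
- by rewrite sB0 !addr0 hq0r andbF /= subrr !addr0.
Qed.

Definition SQ (n : nat) (a : bool * W) : Prop :=
  match n with 0 => True | 1 => a.1 = false /\ B a.2 | _ => a = (false, 0) end.

Lemma kerS1 (x : Q) : (x.1 = false /\ B x.2) <-> piQ x = mone LL.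
Proof.
case: x => i u /=; split.
- move=> [-> hu]; rewrite /piQ /= (proj2 (piB_eq0 HB0 HBsub u) hu); by [].
- rewrite /piQ /= => e; have e1 := congr1 fst e; have e2 := congr1 snd e.
  simpl in e1, e2; split => //; exact/(piB_eq0 HB0 HBsub u).
Qed.

Lemma qm0 : @quotient_map Q LL (SQ 1) piQ.
Proof.
split; first exact: ZM_loop.
split; first exact: piQ_hom.
split; last exact: kerS1.
by move=> [a c]; exists (a, sB c); rewrite /piQ /= sBK.
Qed.

Lemma qm1 : @quotient_map Q Q (SQ 2) id.
Proof.
split; first exact: Q_loop.
split; first by [].
by split => // y; exists y.
Qed.

Lemma qmF : @quotient_map (FxW W) LL (fun a : FxW W => a.1 = false /\ B a.2) piQ.
Proof.
split; first exact: ZM_loop.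
split; first by move=> [i u] [j v]; rewrite /piQ /= pairD piB_add.
split; last exact: kerS1.
by move=> [a c]; exists (a, sB c); rewrite /piQ /= sBK.
Qed.

Lemma SQ_series : @normal_series Q SQ 2.
Proof.
split; first by [].
split; first by move=> x; split.
split.
  by move=> i; case: i => [|[|]] // _ x /= ->; split.
move=> i; case: i => [|[|[|]]] // _.
- exists Unit; split; first exact: Unit_loop.
  by exists (fun _ => tt); split.
- exists LL; split; first exact: ZM_loop.
  exists piQ; split; first exact: piQ_hom.
  exact: kerS1.
- exists Q; split; first exact: Q_loop.
  by exists id; split.
Qed.

Lemma main_sec :
  let QQ := Qloop one q in
  let X : QQ -> Prop := fun a => a.1 = false in
  (is_loop QQ /\ centrally_nilpotent QQ /\
   exists L : magma, is_loop L /\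
     (exists pi : FxW W -> L, quotient_map (fun a : FxW W => a.1 = false /\ B a.2) pi) /\
     exists Bg : zmodType,
       (exists iota : Bg -> W, (forall x y, iota (x + y) = iota x + iota y) /\
          injective iota /\ forall w, B w <-> exists x, iota x = w) /\
       central_extension_of QQ Bg L) /\
  (congruence_solvable QQ /\ classically_solvable QQ) /\
  is_extra QQ /\
  (is_group QQ <-> forall u v, q (u + v) = q u (+) q v) /\
  (normal_subloop X /\ comm_group_sub X) /\
  (~ is_group QQ -> ~ abelian_in X).
Proof.
move=> QQ X.
split.
  split; first exact: Q_loop.
  split.
    split; first exact: Q_loop.
    exists 2%N, SQ; split; first exact: SQ_series.
    move=> i; case: i => [|[|]] // _.
    - exists LL, piQ; split; first exact: qm0.
      by move=> y _; exact: ZM_center.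
    - exists QQ, id; split; first exact: qm1.
      move=> y [[i u] [/= -> hb] <-]; exact: Q_center.
  exists LL; split; first exact: ZM_loop.
  split; first by exists piQ; exact: qmF.
  exists BT; split.
    exists (fun x : BT => proj1_sig x); split; first by [].
    split; first by move=> x y; exact: BT_inj.
    move=> w; split; first by move=> hw; exists (toBT w); exact: toBTK.
    by move=> [x <-]; exact: BT_B.
  exists thQ; split; first exact: thQ1.
  by exists fQ; exact: fQ_iso.
split.
  split.
    split; first exact: Q_loop.
    exists 2%N, SQ; split; first exact: SQ_series.
    move=> i; case: i => [|[|]] // _.
    - exists LL, piQ; split; first exact: qm0.
      apply: ZM_abelian => -[a c]; exists (a, sB c) => //.
      by rewrite /piQ /= sBK.
    - exists QQ, id; split; first exact: qm1.
      exists LL, BT, (fun _ _ => id), (fun _ _ => id), thQ.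
      split; first exact: ZM_loop.
      split; first by move=> r s; split; split => //; exists id.
      split; first by move=> r; have [t1 t2] := thQ1 r; split => //.
      exists fQ; split; first exact: fQ_iso.
      move=> x; split.
      + by move=> [y hy <-]; apply/kerS1.
      + by move=> hx; exists x => //; apply/kerS1.
  split; first exact: Q_loop.
  exists 2%N, SQ; split; first exact: SQ_series.
  move=> i; case: i => [|[|]] // _.
  - exists LL, piQ; split; first exact: qm0.
    exact: ZM_comm.
  - exists QQ, id; split; first exact: qm1.
    move=> x y z [[i u] [/= hi hu] <-] [y' _ <-] [z' _ <-].
    rewrite hi; have [Hn Hc] := Q_center hu.
    split; first exact: Hc.
    by have [H1 _] := Hn y' z'.
split; first exact: Q_extra.
split; first exact: Q_group_iff.
split; last exact: Q_vi.
split; last exact: Q_X_comm.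
exists (ZM F2); split; first exact: ZM_loop.
exists (fun a : QQ => (a.1 : F2)); split; last by [].
by move=> x y; rewrite QmulR.
Qed.
End QL.

Local Close Scope quotient_scope.
Unset Implicit Arguments.
Theorem proposition3p1 (W : zmodType) (B : W -> Prop) (one : W) (q : W -> bool)
  (* F = {0, one} is a subgroup of order 2 of W *)
  (Hone0 : one != 0) (Hone2 : one + one = 0)
  (* B is a subgroup of W with F <= B *)
  (HB0 : B 0) (HBsub : forall u v, B u -> B v -> B (u - v)) (HBone : B one)
  (* W/B is an elementary abelian 2-group *)
  (HB2 : forall u, B (u + u))
  (* q = qbar o (W -> W/B): q is constant on cosets of B *)
  (Hqwd : forall u b, B b -> q (u + b) = q u)
  (* qbar is a quadratic form over F: qbar(0 * u) = 0 and h is F-bilinear *)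
  (Hq0 : q 0 = false)
  (Hhl : forall u u' v, hq q (u + u') v = hq q u v (+) hq q u' v)
  (Hhr : forall u v v', hq q u (v + v') = hq q u v (+) hq q u v') :
  let Q := Qloop one q in
  let X : Q -> Prop := fun a => a.1 = false in
  (* (i) *)
  (is_loop Q /\ centrally_nilpotent Q /\
   exists L : magma, is_loop L /\
     (exists pi : FxW W -> L, quotient_map (fun a : FxW W => a.1 = false /\ B a.2) pi) /\
     exists Bg : zmodType,
       (exists iota : Bg -> W, (forall x y, iota (x + y) = iota x + iota y) /\
          injective iota /\ forall w, B w <-> exists x, iota x = w) /\
       central_extension_of Q Bg L) /\
  (* (ii) *)
  (congruence_solvable Q /\ classically_solvable Q) /\
  (* (iii) *)
  is_extra Q /\
  (* (iv) *)
  (is_group Q <-> forall u v, q (u + v) = q u (+) q v) /\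
  (* (v) *)
  (normal_subloop X /\ comm_group_sub X) /\
  (* (vi) *)
  (~ is_group Q -> ~ abelian_in X).
Proof. by apply: main_sec. Qed.
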